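(* Let $V$ be a Whittaker module of type $\eta$ over $R$ with cyclic Whittaker vector $w$, and suppose $Z_V=(p(\Omega)^n)$ where $p$ is an irreducible polynomial and $n\ge1$. Then $V$ has a unique maximal submodule, namely $V_1=Rp(\Omega)w$.
   Context: Let $f\in\mathbb{C}[H]$ be a polynomial. $R=R(f)$ is the associative $\mathbb{C}$-algebra generated by $E,F,H$ with relations $EF-FE=f(H)$, $HE-EH=E$, $HF-FH=-F$. Let $u\in\mathbb{C}[H]$ satisfy $f(H)=\tfrac12(u(H+1)-u(H))$ and $\Omega=2FE+u(H+1)$; the center $Z(R)$ is the polynomial ring $\mathbb{C}[\Omega]$. Let $R(E)=\mathbb{C}[E]$ and fix an algebra homomorphism $\eta:R(E)\to\mathbb{C}$ with $\eta(E)\neq0$. A vector $v$ of an $R$-module $V$ is a Whittaker vector of type $\eta$ if $Ev=\eta(E)v$; $V$ is a Whittaker module of type $\eta$ with cyclic Whittaker vector $w$ if $w$ is a Whittaker vector and $V=Rw$. $Z_V=\mathrm{Ann}_R(V)\cap Z(R)$. *)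

(* Defs.v *)
From HB Require Import structures.
From mathcomp Require Import all_boot all_order all_algebra.
From mathcomp Require Import reals.
From mathcomp.real_closed Require Import complex.
Set Implicit Arguments. Unset Strict Implicit. Unset Printing Implicit Defensive.
Import Order.TTheory GRing.Theory Num.Theory.
Local Open Scope ring_scope.

Definition pact (K : nzRingType) (V : lmodType K) (T : V -> V) (q : {poly K}) (v : V) : V :=
  \sum_(i < size q) q`_i *: iter i T v.

(* Submodules of the R(f)-module V, where E, F, H act as the given operators. *)
Definition submod (K : nzRingType) (V : lmodType K) (E F H : V -> V) (M : V -> Prop) : Prop :=
  [/\ M 0, (forall x y, M x -> M y -> M (x + y)),
      (forall (a : K) x, M x -> M (a *: x)) &
      (forall x, M x -> [/\ M (E x), M (F x) & M (H x)])].

Definition gensub (K : nzRingType) (V : lmodType K) (E F H : V -> V) (v : V) : V -> Prop :=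
  fun x => forall M, submod E F H M -> M v -> M x.

Definition maxsub (K : nzRingType) (V : lmodType K) (E F H : V -> V) (M : V -> Prop) : Prop :=
  [/\ submod E F H M, (exists x, ~ M x) &
      forall N, submod E F H N -> (forall x, M x -> N x) ->
        (forall x, N x -> M x) \/ (forall x, N x)].

Definition Omega (K : nzRingType) (V : lmodType K) (E F H : V -> V) (u : {poly K}) (v : V) : V :=
  2%:R *: F (E v) + pact H (u \Po ('X + 1)) v.

(* Main.v *)
Require Import Defs.
From HB Require Import structures.
From mathcomp Require Import all_boot all_order all_algebra.
From mathcomp Require Import reals.
From mathcomp.real_closed Require Import complex.
From Stdlib Require Import Classical.
Import Order.TTheory GRing.Theory Num.Theory.
Set Implicit Arguments. Unset Strict Implicit. Unset Printing Implicit Defensive.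
Local Open Scope ring_scope.

Definition lin (K : nzRingType) (V : lmodType K) (T : V -> V) :=
  forall (a : K) x y, T (a *: x + y) = a *: T x + T y.

Section Lin.
Variables (K : numClosedFieldType) (V : lmodType K).
Implicit Types (T S : V -> V) (q g r : {poly K}) (x y v : V).

Lemma lin0 T : lin T -> T 0 = 0.
Proof.
move=> hT; have := hT 1 0 0; rewrite !scale1r addr0.
by move/(congr1 (fun z => z - T 0)); rewrite subrr addrK => <-.
Qed.

Lemma linD T x y : lin T -> T (x + y) = T x + T y.
Proof. by move=> hT; have := hT 1 x y; rewrite !scale1r. Qed.

Lemma linZ T a x : lin T -> T (a *: x) = a *: T x.
Proof. by move=> hT; have := hT a x 0; rewrite !addr0 lin0 // addr0. Qed.

Lemma linN T x : lin T -> T (- x) = - T x.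
Proof. by move=> hT; rewrite -scaleN1r linZ // scaleN1r. Qed.

Lemma linB T x y : lin T -> T (x - y) = T x - T y.
Proof. by move=> hT; rewrite linD // linN. Qed.

Lemma lin_sum T n (g : 'I_n -> V) : lin T -> T (\sum_(i < n) g i) = \sum_(i < n) T (g i).
Proof.
move=> hT; apply: (big_rec2 (fun a b => T a = b)); first exact: lin0.
by move=> i y1 y2 _ <-; rewrite linD.
Qed.

Lemma lin_iter T i : lin T -> lin (iter i T).
Proof.
move=> hT; elim: i => [|i IH] a x y //=.
by rewrite IH hT.
Qed.

Lemma pactE_wide T q v N : (size q <= N)%N ->
  pact T q v = \sum_(i < N) q`_i *: iter i T v.
Proof.
move=> hN; rewrite /pact (big_ord_widen N (fun i => q`_i *: iter i T v) hN).
rewrite big_mkcond /=; apply: eq_bigr => i _; case: ifP => // /negbT.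
by rewrite -leqNgt => hi; rewrite nth_default ?scale0r.
Qed.

Lemma pact0 T v : pact T 0 v = 0.
Proof. by rewrite /pact size_poly0 big_ord0. Qed.

Lemma pactD T r g v : pact T (r + g) v = pact T r v + pact T g v.
Proof.
set N := maxn (size r) (size g).
rewrite !(@pactE_wide _ _ _ N) ?leq_maxl ?leq_maxr ?size_polyD //.
by rewrite -big_split; apply: eq_bigr => i _; rewrite coefD scalerDl.
Qed.

Lemma pactZ T c q v : pact T (c *: q) v = c *: pact T q v.
Proof.
rewrite !(@pactE_wide _ _ _ (size q)) ?size_scale_leq //.
by rewrite scaler_sumr; apply: eq_bigr => i _; rewrite coefZ scalerA.
Qed.

Lemma pactN T q v : pact T (- q) v = - pact T q v.
Proof. by rewrite -(scaleN1r q) pactZ scaleN1r. Qed.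

Lemma pactB T r g v : pact T (r - g) v = pact T r v - pact T g v.
Proof. by rewrite pactD pactN. Qed.

Lemma pactC T c v : pact T c%:P v = c *: v.
Proof.
rewrite (@pactE_wide _ _ _ 1) ?size_polyC_leq1 //.
by rewrite big_ord1 coefC /=.
Qed.

Lemma pact_lin T q : lin T -> lin (pact T q).
Proof.
move=> hT a x y; rewrite /pact scaler_sumr -big_split; apply: eq_bigr => i _.
by rewrite lin_iter // scalerDr !scalerA mulrC.
Qed.

Lemma pact_ext T T' q v : (forall x, T x = T' x) -> pact T q v = pact T' q v.
Proof.
move=> e; apply: eq_bigr => i _; congr (_ *: _).
by elim: (nat_of_ord i) => //= k ->.
Qed.

Lemma pact_comm S T T' q v : lin S -> (forall x, S (T x) = T' (S x)) ->
  S (pact T q v) = pact T' q (S v).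
Proof.
move=> hS e; rewrite /pact lin_sum //; apply: eq_bigr => i _; rewrite linZ //.
by congr (_ *: _); elim: (nat_of_ord i) => //= k <-.
Qed.

Lemma pactMX T q v : pact T (q * 'X) v = pact T q (T v).
Proof.
rewrite (@pactE_wide _ _ _ (size q).+1); last first.
  by rewrite (leq_trans (size_polyMleq _ _)) // size_polyX addn2.
rewrite big_ord_recl coefMX /= scale0r add0r.
by apply: eq_bigr => i _; rewrite coefMX /= add0n -iterS iterSr.
Qed.

Lemma pactX T v : pact T 'X v = T v.
Proof. by rewrite -['X]mul1r pactMX -polyC1 pactC scale1r. Qed.

Lemma pactM T q r v : lin T -> pact T (q * r) v = pact T q (pact T r v).
Proof.
move=> hT; elim/poly_ind: q v => [|q c IH] v; first by rewrite mul0r !pact0.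
rewrite mulrDl -mulrA -(commr_polyX r) mulrA mul_polyC pactD pactMX IH pactZ.
by rewrite pactD pactMX pactC (@pact_comm T T T).
Qed.

Lemma pact_comp T g q v : lin T -> pact T (g \Po q) v = pact (pact T q) g v.
Proof.
move=> hT; elim/poly_ind: g v => [|g c IH] v; first by rewrite comp_poly0 !pact0.
rewrite comp_polyD comp_polyM comp_polyX comp_polyC pactD pactM // IH pactC.
by rewrite pactD pactMX pactC.
Qed.

Lemma pact_closed (M : V -> Prop) T q v : M 0 -> (forall x y, M x -> M y -> M (x + y)) ->
  (forall (a : K) x, M x -> M (a *: x)) -> (forall x, M x -> M (T x)) -> M v -> M (pact T q v).
Proof.
move=> h0 hD hZ hT hv; rewrite /pact; apply: (big_rec (fun z => M z)) => // i y _ hy.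
apply: hD => //; apply: hZ; elim: (nat_of_ord i) => //= k hk; exact: hT.
Qed.
End Lin.
Lemma shift_size (K : numDomainType) (g : {poly K}) : (1 < size g)%N ->
  (size (g \Po ('X - 1%:P) - g)%R < size g)%N.
Proof.
move=> hg.
have hs : size (g \Po ('X - 1%:P)) = size g by rewrite size_comp_poly2 // size_XsubC.
have hl : lead_coef (g \Po ('X - 1%:P)) = lead_coef g.
  by rewrite lead_coef_comp ?size_XsubC // lead_coefXsubC expr1n mulr1.
rewrite -(prednK (ltnW hg)) ltnS; apply/leq_sizeP => j hj.
rewrite coefB; move: hj; rewrite leq_eqVlt => /orP[/eqP <-|hj].
  by move: hl; rewrite !lead_coefE hs => ->; rewrite subrr.
rewrite !nth_default ?subrr //; first by rewrite -(prednK (ltnW hg)).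
by rewrite hs -(prednK (ltnW hg)).
Qed.

Lemma shift_neq0 (K : numDomainType) (g : {poly K}) : (1 < size g)%N ->
  g \Po ('X - 1%:P) - g != 0.
Proof.
move=> hg; apply/negP; rewrite subr_eq0 => /eqP e.
have hk : forall k : nat, g.[- k%:R] = g.[0].
  elim=> [|k IH]; first by rewrite oppr0.
  by rewrite -natr1 opprD -IH -{2}e horner_comp hornerXsubC.
set h := g - (g.[0])%:P.
have hh : h != 0.
  apply/negP; rewrite subr_eq0 => /eqP eg.
  by move: hg; rewrite eg size_polyC; case: (_ != 0).
have hsz : (size h <= size g)%N.
  rewrite (leq_trans (size_polyD _ _)) // size_polyN geq_max leqnn /=.
  by rewrite (leq_trans (size_polyC_leq1 _)) // ltnW.
set rs := [seq - (k%:R : K) | k <- iota 0 (size g)].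
have := @max_poly_roots _ h rs hh.
have -> : all (root h) rs.
  apply/allP => x /mapP[k _ ->]; rewrite /root /h hornerD hornerN hornerC hk subrr //.
have -> : uniq rs.
  rewrite map_inj_uniq ?iota_uniq // => a b /oppr_inj /eqP; rewrite eqr_nat => /eqP.
  done.
move=> /(_ isT isT); rewrite size_map size_iota => /leq_trans /(_ hsz).
by rewrite ltnn.
Qed.

Lemma solve_sub (W : zmodType) (a b c : W) : a - b = c -> b = a - c.
Proof. by move<-; rewrite opprB addrC subrK. Qed.

Section Main.
Variables (K : numClosedFieldType) (f u : {poly K}) (V : lmodType K) (E F H : V -> V).
Hypotheses (hu : f = 2%:R^-1 *: (u \Po ('X + 1) - u))
  (lE : lin E) (lF : lin F) (lH : lin H)
  (hEF : forall v, E (F v) - F (E v) = pact H f v)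
  (hHE : forall v, H (E v) - E (H v) = E v)
  (hHF : forall v, H (F v) - F (H v) = - F v)
  (eta : K) (heta : eta != 0) (w : V) (hw : E w = eta *: w)
  (hcyc : forall x, gensub E F H w x)
  (p : {poly K}) (hp : irreducible_poly p) (n : nat) (hn : (1 <= n)%N)
  (hZ : forall q : {poly K},
          (forall v, pact (Omega E F H u) q v = 0) <-> (p ^+ n %| q)).

Local Notation Om := (Omega E F H u).
Local Notation U1 := (u \Po ('X + 1)).
Local Notation P := (pact Om p).

Lemma h2 : (2%:R : K) != 0. Proof. by rewrite pnatr_eq0. Qed.

Lemma hEH x : E (H x) = pact H ('X - 1) (E x).
Proof.
by rewrite pactB pactX -polyC1 pactC scale1r; apply: solve_sub; exact: hHE.
Qed.

Lemma hFH x : F (H x) = pact H ('X + 1) (F x).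
Proof.
by rewrite pactD pactX -polyC1 pactC scale1r (solve_sub (hHF x)) opprK.
Qed.

Lemma hEF' x : E (F x) = F (E x) + pact H f x.
Proof. by rewrite -(hEF x) addrC subrK. Qed.

Lemma E_pactH g x : E (pact H g x) = pact H (g \Po ('X - 1)) (E x).
Proof. by rewrite pact_comp //; apply: pact_comm => // y; exact: hEH. Qed.

Lemma F_pactH g x : F (pact H g x) = pact H (g \Po ('X + 1)) (F x).
Proof. by rewrite pact_comp //; apply: pact_comm => // y; exact: hFH. Qed.

Lemma linOm : lin Om.
Proof.
move=> a x y; rewrite /Omega lE lF pact_lin //.
rewrite !scalerDr !scalerA [2%:R * a]mulrC -!scalerA.
by rewrite addrACA.
Qed.

Lemma alg2 (A B C : V) : 2%:R *: (A + 2%:R^-1 *: (B - C)) + C = 2%:R *: A + B.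
Proof.
by rewrite scalerDr scalerA mulfV ?h2 // scale1r -addrA subrK.
Qed.

Lemma HOm x : H (Om x) = Om (H x).
Proof.
rewrite /Omega lH.
rewrite (@pact_comm _ _ H H H) //.
have hHF2 y : H (F y) = - F y + F (H y) by have /eqP := hHF y; rewrite subr_eq => /eqP.
have hHE2 y : H (E y) = E y + E (H y) by have /eqP := hHE y; rewrite subr_eq => /eqP.
by rewrite hHF2 hHE2 (@linD _ _ F) // addKr.
Qed.

Lemma EOm x : E (Om x) = Om (E x).
Proof.
rewrite /Omega lE hEF' E_pactH.
have -> : U1 \Po ('X - 1) = u.
  by rewrite -comp_polyA comp_polyD comp_polyX -polyC1 comp_polyC subrK comp_polyXr.
by rewrite hu pactZ pactB alg2.
Qed.

Lemma FOm x : F (Om x) = Om (F x).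
Proof.
rewrite /Omega lF F_pactH hEF' (@linD _ _ F) // F_pactH.
by rewrite hu comp_polyZ comp_polyB pactZ pactB alg2.
Qed.

Lemma alg3 (c q r : K) (A B C D : V) :
  c *: (q *: (C - r *: A) - B) + D = c *: (- (q * r) *: A - B) + ((c * q) *: C + D).
Proof.
rewrite -scalerA addrA -scalerDr; congr (_ *: _ + _).
by rewrite scalerBr scalerA scaleNr [RHS]addrC addrA.
Qed.

Lemma subOm N : submod E F H N -> forall x, N x -> N (Om x).
Proof.
case=> h0 hD hZs hEFH x hx; rewrite /Omega.
have [hEx _ _] := hEFH x hx; have [_ hFEx _] := hEFH _ hEx.
apply: (hD); first exact: hZs.
by apply: pact_closed => // y hy; case: (hEFH y hy).
Qed.

Lemma subP N q : submod E F H N -> forall x, N x -> N (pact Om q x).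
Proof.
move=> hN x hx; case: (hN) => h0 hD hZs _.
by apply: pact_closed => // y hy; apply: subOm.
Qed.

Lemma linP q : lin (pact Om q).
Proof. exact: pact_lin linOm. Qed.

Lemma commP S q : lin S -> (forall x, S (Om x) = Om (S x)) -> forall x, S (pact Om q x) = pact Om q (S x).
Proof. by move=> hS e x; apply: pact_comm. Qed.

Lemma submod_img : submod E F H (fun y => exists v, y = P v).
Proof.
split.
- by exists 0; rewrite lin0 //; exact: linP.
- by move=> x y [v1 ->] [v2 ->]; exists (v1 + v2); rewrite linD //; exact: linP.
- by move=> a x [v ->]; exists (a *: v); rewrite linZ //; exact: linP.
- move=> x [v ->]; split.
  + by exists (E v); rewrite commP //; exact: EOm.
  + by exists (F v); rewrite commP //; exact: FOm.
  + by exists (H v); rewrite commP //; exact: HOm.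
Qed.

Lemma hpn v : pact Om (p ^+ n) v = 0.
Proof. by apply: (proj2 (hZ _)); exact: dvdpp. Qed.

Lemma nak N : submod E F H N -> (forall x, exists m v, N m /\ x = m + P v) -> forall x, N x.
Proof.
move=> hN hx.
have hk : forall k x, exists m v, N m /\ x = m + pact Om (p ^+ k) v.
  elim=> [|k IH] x.
    exists 0, x; split; first by case: hN.
    by rewrite expr0 -polyC1 pactC scale1r add0r.
  have [m [v [hm ->]]] := IH x; have [m' [v' [hm' ->]]] := hx v.
  exists (m + pact Om (p ^+ k) m'), v'; split.
    by case: (hN) => _ hD _ _; apply: (hD) => //; apply: subP.
  have -> : p ^+ k.+1 = p ^+ k * p by exact: exprSr.
  by rewrite (linD _ _ (linP _)) (pactM _ _ _ linOm) addrA.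
move=> x; have [m [v [hm ->]]] := hk n x; by rewrite hpn addr0.
Qed.

Lemma not_img_w : ~ (exists v, w = P v).
Proof.
move=> hw'.
have hall : forall x, exists v, x = P v.
  move=> x; have := hcyc x; rewrite /gensub => h; apply: (h (fun y => exists v, y = P v)); [exact: submod_img | exact: hw'].
have z : forall x : V, x = 0.
  apply: (@nak (fun x => x = 0)).
    split => //.
    - by move=> x y -> ->; rewrite addr0.
    - by move=> a x ->; rewrite scaler0.
    - by move=> x ->; rewrite (lin0 lE) (lin0 lF) (lin0 lH).
  by move=> x; have [v ->] := hall x; exists 0, v; rewrite add0r.
have : p ^+ n %| 1.
  by apply: (proj1 (hZ _)) => v; rewrite -polyC1 pactC scale1r; apply: z.
move=> h1; have : p %| 1 by apply: dvdp_trans h1; apply: dvdp_exp.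
by rewrite dvdp1; case: hp => hs _ /eqP e; rewrite e in hs.
Qed.

Lemma hp2 : size p = 2.
Proof.
case: hp => hs hirr.
have /closed_rootP [x hx] : size p != 1 by rewrite neq_ltn hs orbT.
have hd : ('X - x%:P) %| p by rewrite dvdp_XsubCl.
by rewrite -(eqp_size (hirr _ _ hd)) ?size_XsubC.
Qed.

Lemma Pw : P w = p`_0 *: w + p`_1 *: Om w.
Proof. by rewrite /pact hp2 !big_ord_recr big_ord0 /= add0r. Qed.

Lemma p1n0 : p`_1 != 0.
Proof.
have : lead_coef p != 0 by rewrite lead_coef_eq0 -size_poly_gt0 hp2.
by rewrite lead_coefE hp2.
Qed.

Lemma Omw : Om w = (p`_1)^-1 *: (P w - p`_0 *: w).
Proof. by rewrite Pw [p`_0 *: w + _]addrC addrK scalerA mulVf ?p1n0 // scale1r. Qed.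

Lemma Fw : F w = (2%:R * eta)^-1 *: (Om w - pact H U1 w).
Proof.
have -> : Om w - pact H U1 w = (2%:R * eta) *: F w.
  by rewrite /Omega addrK hw linZ // scalerA.
by rewrite scalerA mulVf ?scale1r // mulf_neq0 ?h2.
Qed.

Lemma Dec x : exists g v, x = pact H g w + P v.
Proof.
pose S := fun x => exists g v, x = pact H g w + P v.
have hS : submod E F H S.
  split.
  - by exists 0, 0; rewrite pact0 (lin0 (linP _)) addr0.
  - move=> x1 x2 [g1 [v1 ->]] [g2 [v2 ->]]; exists (g1 + g2), (v1 + v2).
    by rewrite pactD (linD _ _ (linP _)) addrACA.
  - move=> a x1 [g1 [v1 ->]]; exists (a *: g1), (a *: v1).
    by rewrite pactZ (linZ _ _ (linP _)) scalerDr.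
  - move=> x1 [g [v ->]]; split.
    + exists (eta *: (g \Po ('X - 1))), (E v).
      by rewrite (linD _ _ lE) E_pactH hw (linZ _ _ (pact_lin _ lH)) pactZ (commP _ lE EOm).
    + set c := (2%:R * eta)^-1; set G := g \Po ('X + 1).
      exists (c *: (- ((p`_1)^-1 * p`_0) *: G - G * U1)), (c * (p`_1)^-1 *: pact H G w + F v).
      rewrite (linD _ _ lF) F_pactH Fw Omw -/c -/G (commP _ lF FOm).
      rewrite (linZ _ _ (pact_lin _ lH)) (linB _ _ (pact_lin _ lH)).
      rewrite (linZ _ _ (pact_lin _ lH)) (linB _ _ (pact_lin _ lH)).
      rewrite (linZ _ _ (pact_lin _ lH)) -(pactM _ _ _ lH).
      rewrite (commP _ (pact_lin G lH)); last first.
        by move=> y; symmetry; apply: pact_comm; [exact: linOm | move=> z; rewrite HOm].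
      rewrite alg3 (linD _ _ (linP _)) (linZ _ _ (linP _)).
      by rewrite pactZ pactB pactZ.
    + exists (g * 'X), (H v).
      by rewrite (linD _ _ lH) (commP _ lH HOm) pactMX (@pact_comm _ _ H H H).
have hSw : S w by exists 1, 0; rewrite -polyC1 pactC scale1r (lin0 (linP _)) addr0.
by have := hcyc x; rewrite /gensub => h; apply: (h S).
Qed.

Lemma Desc N : submod E F H N -> forall k (g : {poly K}) (x : V), (size g <= k.+1)%N -> g != 0 -> N x ->
  (exists v, x = pact H g w + P v) -> exists m v, N m /\ w = m + P v.
Proof.
move=> hN; case: (hN) => h0 hD hZs hEFH.
elim=> [|k IH] g x hs hg hx [v ex].
  have eg := size1_polyC hs; set g0 := g`_0 in eg.
  have hg0 : g0 != 0 by move: hg; rewrite eg polyC_eq0.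
  exists (g0^-1 *: x), (- g0^-1 *: v); split; first exact: hZs.
  rewrite ex eg pactC scalerDr scalerA mulVf // scale1r (linZ _ _ (linP _)).
  by rewrite scaleNr addrK.
case: (leqP (size g) k.+1) => hs'; first exact: (IH g x hs' hg hx (ex_intro _ v ex)).
have hs2 : size g = k.+2 by apply/eqP; rewrite eqn_leq hs hs'.
have h1 : (1 < size g)%N by rewrite hs2.
pose g' := eta *: (g \Po ('X - 1) - g).
apply: (IH g' (E x - eta *: x)).
- rewrite (leq_trans (size_scale_leq _ _)) // -ltnS -hs2.
  by have := shift_size h1; rewrite polyC1.
- by rewrite scale_poly_eq0 negb_or heta /=; have := shift_neq0 h1; rewrite polyC1.
- by rewrite -scaleNr; apply: (hD); [case: (hEFH x hx) | apply: hZs].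
- exists (E v - eta *: v).
  rewrite ex (linD _ _ lE) E_pactH hw (linZ _ _ (pact_lin _ lH)) (commP _ lE EOm).
  rewrite /g' pactZ pactB (linB _ _ (linP _)) (linZ _ _ (linP _)).
  by rewrite scalerDr scalerBr opprD addrACA.
Qed.

Lemma Key N : submod E F H N -> forall x, N x -> ~ (exists v, x = P v) -> forall y, N y.
Proof.
move=> hN x hx hnx; have [g [v ex]] := Dec x.
have hg : g != 0.
  by apply/negP => /eqP eg; apply: hnx; exists v; rewrite ex eg pact0 add0r.
have [m [v' [hm ew]]] := Desc hN (leqnSn (size g)) hg hx (ex_intro _ v ex).
case: (hN) => h0 hD hZs hEFH.
pose S := fun y => exists m v, N m /\ y = m + P v.
have hS : submod E F H S.
  split.
  - by exists 0, 0; rewrite (lin0 (linP _)) addr0.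
  - move=> x1 x2 [m1 [v1 [hm1 ->]]] [m2 [v2 [hm2 ->]]]; exists (m1 + m2), (v1 + v2).
    by split; [exact: hD | rewrite (linD _ _ (linP _)) addrACA].
  - move=> a x1 [m1 [v1 [hm1 ->]]]; exists (a *: m1), (a *: v1).
    by split; [exact: hZs | rewrite (linZ _ _ (linP _)) scalerDr].
  - move=> x1 [m1 [v1 [hm1 ->]]]; have [hE1 hF1 hH1] := hEFH _ hm1; split.
    + by exists (E m1), (E v1); rewrite (linD _ _ lE) (commP _ lE EOm).
    + by exists (F m1), (F v1); rewrite (linD _ _ lF) (commP _ lF FOm).
    + by exists (H m1), (H v1); rewrite (linD _ _ lH) (commP _ lH HOm).
apply: nak => // y.
by have := hcyc y; rewrite /gensub => h; apply: (h S) => //; exists m, v'.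
Qed.

Lemma W_iff x : gensub E F H (P w) x <-> exists v, x = P v.
Proof.
split.
  by rewrite /gensub => h; apply: (h (fun y => exists v, y = P v)); [exact: submod_img | exists w].
move=> [v ->].
have hW : submod E F H (gensub E F H (P w)).
  split.
  - by move=> M [h0 _ _ _].
  - by move=> x1 x2 h1 h2 M hM hw'; case: (hM) => _ hD _ _; apply: hD; [exact: h1 | exact: h2].
  - by move=> a x1 h1 M hM hw'; case: (hM) => _ _ hZs _; apply: hZs; exact: h1.
  - move=> x1 h1; split => M hM hw'; case: (hM) => _ _ _ hEFH; have [? ? ?] := hEFH _ (h1 M hM hw'); done.
pose T := fun v => gensub E F H (P w) (P v).
have hT : submod E F H T.
  case: hW => h0 hD hZs hEFH; split.
  - by rewrite /T (lin0 (linP _)).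
  - by move=> x1 x2 h1 h2; rewrite /T (linD _ _ (linP _)); apply: hD.
  - by move=> a x1 h1; rewrite /T (linZ _ _ (linP _)); apply: hZs.
  - move=> x1 h1; have [? ? ?] := hEFH _ h1; split; rewrite /T.
    + by rewrite -(commP _ lE EOm).
    + by rewrite -(commP _ lF FOm).
    + by rewrite -(commP _ lH HOm).
have hTw : T w by move=> M _ ?.
by have := hcyc v; rewrite /gensub => h; apply: (h T).
Qed.

Lemma main_gen :
  maxsub E F H (gensub E F H (P w)) /\
  (forall M, maxsub E F H M -> forall x, M x <-> gensub E F H (P w) x).
Proof.
have hW : submod E F H (gensub E F H (P w)).
  split.
  - by move=> M [h0 _ _ _].
  - by move=> x1 x2 h1 h2 M hM hw'; case: (hM) => _ hD _ _; apply: hD; [exact: h1 | exact: h2].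
  - by move=> a x1 h1 M hM hw'; case: (hM) => _ _ hZs _; apply: hZs; exact: h1.
  - move=> x1 h1; split => M hM hw'; case: (hM) => _ _ _ hEFH; have [? ? ?] := hEFH _ (h1 M hM hw'); done.
have hnw : ~ gensub E F H (P w) w by rewrite W_iff; exact: not_img_w.
have sub_or : forall N, submod E F H N -> (forall x, N x -> gensub E F H (P w) x) \/ (forall x, N x).
  move=> N hN; case: (classic (forall x, N x -> gensub E F H (P w) x)) => h; first by left.
  right; have [x hx] := not_all_ex_not _ _ h.
  have [hNx hWx] := imply_to_and _ _ hx.
  by apply: (Key hN hNx); rewrite -W_iff.
split.
  split => //; first by exists w.
  move=> N hN _; exact: sub_or.
move=> M [hM [y hy] hmax] x; split.
  case: (sub_or M hM) => [h|h]; first exact: h.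
  by move=> _; exfalso; apply: hy; exact: h.
move=> hx; case: (hmax _ hW).
- by move=> z hz; case: (sub_or M hM) => [h|h]; [exact: h | exfalso; apply: hy; exact: h].
- by move=> h; exact: h.
- by move=> h; exfalso; apply: hnw; exact: h.
Qed.

End Main.

Local Open Scope complex_scope.

Theorem mainTheorem12 (Rr : realType) (f u : {poly Rr[i]})
  (hu : f = 2%:R^-1 *: (u \Po ('X + 1) - u))
  (V : lmodType Rr[i]) (E F H : {linear V -> V})
  (hEF : forall v, E (F v) - F (E v) = pact H f v)
  (hHE : forall v, H (E v) - E (H v) = E v)
  (hHF : forall v, H (F v) - F (H v) = - F v)
  (eta : Rr[i]) (heta : eta != 0) (w : V)
  (hw : E w = eta *: w)
  (hcyc : forall x, gensub E F H w x)
  (p : {poly Rr[i]}) (hp : irreducible_poly p) (n : nat) (hn : (1 <= n)%N)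
  (hZ : forall q : {poly Rr[i]},
          (forall v, pact (Omega E F H u) q v = 0) <-> (p ^+ n %| q)) :
  maxsub E F H (gensub E F H (pact (Omega E F H u) p w)) /\
  (forall M, maxsub E F H M ->
     forall x, M x <-> gensub E F H (pact (Omega E F H u) p w) x).
Proof.
have lE : lin E by move=> a x y; exact: linearPZ.
have lF : lin F by move=> a x y; exact: linearPZ.
have lH : lin H by move=> a x y; exact: linearPZ.
exact: (@main_gen Rr[i] f u V E F H hu lE lF lH hEF hHE hHF eta heta w hw hcyc p hp n hn hZ).
Qed.
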